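(* Under the assumptions of Lemma 6.4 stated below, suppose in addition that $\sup_n\|I_n\mathbf K\|_{L^{\infty,1}(\Omega^2)}<+\infty$. Then $\sup_{t\in[0,T],n\in\mathbb N}\|\tilde u_n(\cdot,t)-\bar u_n(\cdot,t)\|_{L^2(\Omega)}\le C\tau$, where $C>0$ does not depend on $(n,N,T)$. Assumptions of Lemma 6.4: $p\in]1,2]$; for each $n$, $\mathbf u^k$ is given by the explicit scheme $\frac{\mathbf u^k-\mathbf u^{k-1}}{\tau_{k-1}}=-\Delta_p^{\mathbf K}\mathbf u^{k-1}+\mathbf f$, $\mathbf u^0=\mathbf g$, with step sizes $\tau_k\le2C_n\|\Delta_p^{I_n\mathbf K}u_n^k-f_n\|_{L^2}^{\frac{2-p}{p-1}}$, $u_n^k=I_n\mathbf u^k$, $f_n=I_n\mathbf f$, $C_n=2^{\frac{p-2}{2(p-1)}}(C_2^{1/2}\|I_n\mathbf K\|_{L^{\infty,1}(\Omega^2)})^{\frac1{1-p}}(1-1/p)$, $C_2=\max(2^{2-p},(p-1)2^{2-p},1)$; $I_n\mathbf g\in L^2(\Omega)$; $I_n\mathbf K$ nonnegative, measurable, symmetric with $\sup_x\int I_n\mathbf K(x,y)dy<\infty$; for each $n$ there is $\mathbf u^\star$ with $\Delta_p^{\mathbf K}\mathbf u^\star=\mathbf f$ and $\sup_n\|I_n\mathbf g-I_n\mathbf u^\star\|_{L^2}<\infty$.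
   Context: $d\ge1$, $\Omega=[0,1]^d$, hypercubic cells $\Omega^n_{\mathbf i}$ of measures $h_{\mathbf i}$, $I_n$ the piecewise-constant injector. $\Psi(s)=|s|^{p-2}s$; $(\Delta_p^{\mathbf K}\mathbf u)_{\mathbf i}=-\sum_{\mathbf j}h_{\mathbf j}\mathbf K_{\mathbf i\mathbf j}\Psi(\mathbf u_{\mathbf j}-\mathbf u_{\mathbf i})$ and $\Delta_p^Ku(x)=-\int_\Omega K(x,y)\Psi(u(y)-u(x))dy$. Time partition $0=t_0<\dots<t_N=T$, $\tau_{k-1}=t_k-t_{k-1}$, $\tau=\max_k\tau_{k-1}$. $\tilde u_n(x,t)=\frac{t_k-t}{\tau_{k-1}}u_n^{k-1}(x)+\frac{t-t_{k-1}}{\tau_{k-1}}u_n^k(x)$ and $\bar u_n(x,t)=u_n^{k-1}(x)$ for $t\in]t_{k-1},t_k]$. $\|F\|_{L^{\infty,1}(\Omega^2)}=\sup_x\int|F(x,y)|dy$. *)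

(* Defs.v *)
From mathcomp Require Import all_boot all_order all_algebra.
From mathcomp Require Import reals exp.
Set Implicit Arguments. Unset Strict Implicit. Unset Printing Implicit Defensive.
Import Order.TTheory GRing.Theory Num.Theory.
Local Open Scope ring_scope.

Section Defs.
Variable R : realType.

Definition Psi (p s : R) : R := (`|s| `^ (p - 2)) * s.

(* Discrete nonlocal p-Laplacian on m cells of measures h:
   (Delta_p^K u)_i = - sum_j h_j K_ij Psi(u_j - u_i).
   For piecewise constant functions this is exactly Delta_p^{I_n K} (I_n u). *)
Definition plap (p : R) (m : nat) (h : 'I_m -> R) (K : 'I_m -> 'I_m -> R)
  (u : 'I_m -> R) : 'I_m -> R :=
  fun i => - \sum_(j < m) h j * K i j * Psi p (u j - u i).

(* L^2(Omega) norm of the piecewise constant function I_n v *)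
Definition l2norm (m : nat) (h : 'I_m -> R) (v : 'I_m -> R) : R :=
  Num.sqrt (\sum_(i < m) h i * v i ^+ 2).

(* ||I_n K||_{L^{infty,1}(Omega^2)} = sup_x int |I_n K(x,y)| dy
   = max_i sum_j h_j |K_ij| *)
Definition kernel_norm (m : nat) (h : 'I_m -> R) (K : 'I_m -> 'I_m -> R) : R :=
  \big[Num.max/0]_(i < m) \sum_(j < m) h j * `|K i j|.

Definition tau (t : nat -> R) (k : nat) : R := t k.+1 - t k.

Definition taumax (t : nat -> R) (N : nat) : R :=
  \big[Num.max/0]_(k < N) tau t k.

Fixpoint scheme (p : R) (m : nat) (h : 'I_m -> R) (K : 'I_m -> 'I_m -> R)
  (f g : 'I_m -> R) (t : nat -> R) (k : nat) : 'I_m -> R :=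
  match k with
  | 0 => g
  | k'.+1 => fun i => scheme p h K f g t k' i
                + tau t k' * (- plap p h K (scheme p h K f g t k') i + f i)
  end.

Definition C2 (p : R) : R :=
  Num.max (2 `^ (2 - p)) (Num.max ((p - 1) * 2 `^ (2 - p)) 1).

Definition Cn (p Kn : R) : R :=
  2 `^ ((p - 2) / (2 * (p - 1))) * (Num.sqrt (C2 p) * Kn) `^ (1 / (1 - p))
  * (1 - 1 / p).

(* linear interpolant tilde u_n(., s) on ]t_k, t_{k+1}] *)
Definition u_tilde {m : nat} (u : nat -> 'I_m -> R) (t : nat -> R) (k : nat) (s : R)
  : 'I_m -> R :=
  fun i => (t k.+1 - s) / tau t k * u k i + (s - t k) / tau t k * u k.+1 i.

(* piecewise constant bar u_n(., s) = u^k on ]t_k, t_{k+1}] *)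
Definition u_bar {m : nat} (u : nat -> 'I_m -> R) (k : nat) : 'I_m -> R := u k.

End Defs.

(* Main.v *)
Require Import Defs.
From mathcomp Require Import all_boot all_order all_algebra.
From mathcomp Require Import reals exp.
From mathcomp Require Import ring lra.
Import Order.TTheory GRing.Theory Num.Theory.
Local Open Scope ring_scope.
Set Implicit Arguments. Unset Strict Implicit.
Section S.
Variable R : realType.
Implicit Types x y a b : R.

Lemma bern_ge (al y : R) : 1 <= al -> 0 <= y -> 1 + al * (y - 1) <= y `^ al.
Proof.
move=> al1 y0.
have [->|al1'] := eqVneq al 1; first by rewrite powRr1 // mul1r; lra.
have al1s : 1 < al by rewrite lt_neqAle eq_sym al1' al1.
pose Q := al / (al - 1).
have Q0 : 0 < Q by rewrite divr_gt0 //; lra.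
have hPQ : al^-1 + Q^-1 = 1.
  rewrite /Q invf_div -{1}(div1r al) -mulrDl addrC subrK mulfV //; lra.
have := conjugate_powR y0 ler01 (lt_le_trans ltr01 al1) Q0 hPQ.
rewrite mulr1 powR1 /Q invf_div => H.
have al0 : 0 < al by lra.
have E : al * (y `^ al / al + 1 * ((al - 1) / al)) = y `^ al + (al - 1).
  by field; rewrite gt_eqF.
have : al * y <= y `^ al + (al - 1) by rewrite -E ler_pM2l.
lra.
Qed.

Lemma bern_le (s y : R) : 0 < s <= 1 -> 0 <= y -> y `^ s <= 1 + s * (y - 1).
Proof.
move=> /andP[s0 s1] y0.
have [->|s1'] := eqVneq s 1; first by rewrite powRr1 // mul1r; lra.
have s1s : s < 1 by rewrite lt_neqAle s1' s1.
have P0 : 0 < s^-1 by rewrite invr_gt0.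
have Q0 : 0 < (1 - s)^-1 by rewrite invr_gt0; lra.
have hPQ : s^-1^-1 + (1 - s)^-1^-1 = 1 by rewrite !invrK; lra.
have := conjugate_powR (powR_ge0 y s) ler01 P0 Q0 hPQ.
rewrite mulr1 powR1 !invrK -powRrM mulfV ?gt_eqF // powRr1 //.
lra.
Qed.

Lemma powR_div (x m a : R) : 0 <= x -> 0 < m -> (x / m) `^ a = x `^ a / m `^ a.
Proof.
move=> x0 m0; rewrite powRM //; last by rewrite invr_ge0 ltW.
by rewrite -powR_inv1 ?ltW // -powRrM mulN1r powRN.
Qed.

Lemma powR_m1 (m a : R) : 0 < m -> m `^ (a - 1) = m `^ a / m.
Proof.
move=> m0; rewrite powRB; last by apply/implyP => _; rewrite gt_eqF.
by rewrite powRr1 // ltW.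
Qed.

Lemma tang_ge (al m x : R) : 1 <= al -> 0 < m -> 0 <= x ->
  m `^ al + al * m `^ (al - 1) * (x - m) <= x `^ al.
Proof.
move=> al1 m0 x0.
have := bern_ge al1 (divr_ge0 x0 (ltW m0)).
rewrite powR_div // powR_m1 //.
have ma0 : 0 < m `^ al by rewrite powR_gt0.
rewrite -(ler_pM2r ma0) divfK ?gt_eqF //.
apply: le_trans; rewrite le_eqVlt; apply/orP; left; apply/eqP.
by field; rewrite gt_eqF.
Qed.

Lemma tang_le (s m x : R) : 0 < s <= 1 -> 0 < m -> 0 <= x ->
  x `^ s <= m `^ s + s * m `^ (s - 1) * (x - m).
Proof.
move=> s1 m0 x0.
have := bern_le s1 (divr_ge0 x0 (ltW m0)).
rewrite powR_div // powR_m1 //.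
have ma0 : 0 < m `^ s by rewrite powR_gt0.
rewrite -(ler_pM2r ma0) divfK ?gt_eqF // => /le_trans; apply.
rewrite le_eqVlt; apply/orP; left; apply/eqP.
by field; rewrite gt_eqF.
Qed.

Lemma powle (r x y : R) : 0 <= r -> 0 <= x -> x <= y -> x `^ r <= y `^ r.
Proof.
move=> r0 x0 xy; apply: (ge0_ler_powR r0) => //; rewrite nnegrE //.
exact: le_trans xy.
Qed.

Lemma powR_lin (s x T : R) : 0 < s <= 1 -> 0 <= x -> x <= T -> 0 < T ->
  x / T * T `^ s <= x `^ s.
Proof.
move=> /andP[s0 s1] x0 xT T0.
have [->|xn0] := eqVneq x 0; first by rewrite mul0r mul0r powR_ge0.
have x0' : 0 < x by rewrite lt_neqAle eq_sym xn0 x0.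
have h1 : x / T <= (x / T) `^ s.
  apply: ger1_powR => //; rewrite divr_gt0 //= ler_pdivrMr // mul1r //.
rewrite powR_div // in h1.
have Ts0 : 0 < T `^ s by rewrite powR_gt0.
by rewrite -(ler_pM2r Ts0) divfK ?gt_eqF // in h1.
Qed.

Lemma subadd_powR (s x y : R) : 0 < s <= 1 -> 0 <= x -> 0 <= y ->
  (x + y) `^ s <= x `^ s + y `^ s.
Proof.
move=> s1 x0 y0.
have [xy0|xy0] := eqVneq (x + y) 0.
  have -> : x = 0 by lra.
  have -> : y = 0 by lra.
  by rewrite addr0 powR0 ?addr0 //; case/andP: s1 => s0 _; rewrite gt_eqF.
have T0 : 0 < x + y by rewrite lt_neqAle eq_sym xy0 addr_ge0.
have h1 := powR_lin s1 x0 (ler_wpDr y0 (lexx x)) T0.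
have h2 := powR_lin s1 y0 (ler_wpDl x0 (lexx y)) T0.
have -> : (x + y) `^ s = x / (x + y) * (x + y) `^ s + y / (x + y) * (x + y) `^ s.
  by field; rewrite gt_eqF.
by apply: lerD.
Qed.

Lemma conc2_powR (s a c : R) : 0 < s <= 1 -> 0 <= a -> 0 <= c ->
  a `^ s + c `^ s <= 2 `^ (1 - s) * (a + c) `^ s.
Proof.
move=> s1 a0 c0; have /andP[s0 s1'] := s1.
have [ac0|ac0] := eqVneq (a + c) 0.
  have -> : a = 0 by lra.
  have -> : c = 0 by lra.
  by rewrite addr0 !powR0 ?gt_eqF // addr0 mulr0.
have T0 : 0 < a + c by rewrite lt_neqAle eq_sym ac0 addr_ge0.
have m0 : 0 < (a + c) / 2 by lra.
have h1 := tang_le s1 m0 a0.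
have h2 := tang_le s1 m0 c0.
have e : 2 `^ (1 - s) * (a + c) `^ s = 2 * ((a + c) / 2) `^ s.
  rewrite powR_div ?addr_ge0 // powRB; last by apply/implyP => _; rewrite pnatr_eq0.
  by rewrite powRr1 //; field; rewrite gt_eqF // powR_gt0.
rewrite e.
apply: le_trans (lerD h1 h2) _.
rewrite le_eqVlt; apply/orP; left; apply/eqP; field. by [].
Qed.

Section Psi.
Variable p : R.
Hypothesis p1 : 1 < p.
Hypothesis p2 : p <= 2.

Lemma Psi_pos (s : R) : 0 <= s -> Psi p s = s `^ (p - 1).
Proof.
have P1 := p1; have P2 := p2.
move=> s0; rewrite /Psi ger0_norm // mulrC.
have -> : p - 2 = (p - 1) - 1 by lra.
by rewrite mulr_powRB1 // subr_gt0.
Qed.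

Lemma Psi_odd (s : R) : Psi p (- s) = - Psi p s.
Proof. by rewrite /Psi normrN mulrN. Qed.

Lemma Psi_neg (s : R) : s <= 0 -> Psi p s = - (- s) `^ (p - 1).
Proof.
have P1 := p1; have P2 := p2.
move=> s0; rewrite -(opprK s) Psi_odd opprK Psi_pos //; lra.
Qed.

Lemma Psi_mono (a b : R) : a <= b -> Psi p a <= Psi p b.
Proof.
have P1 := p1; have P2 := p2.
move=> ab; have sg : 0 <= p - 1 by lra.
have [a0|a0] := leP 0 a.
  by rewrite !Psi_pos ?powle //; lra.
have [b0|b0] := leP 0 b.
  rewrite (Psi_pos (s := b)) // (Psi_neg (s := a)); last by lra.
  have := powR_ge0 (- a) (p - 1); have := powR_ge0 b (p - 1); lra.
rewrite !Psi_neg; try lra.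
rewrite lerN2 powle //; lra.
Qed.

Lemma Psi_hold (a b : R) :
  `|Psi p a - Psi p b| <= 2 `^ (2 - p) * `|a - b| `^ (p - 1).
Proof.
have P1 := p1; have P2 := p2.
have s1 : 0 < p - 1 <= 1 by apply/andP; split; lra.
have L1 : 1 <= 2 `^ (2 - p).
  have h0 : (0 : R) <= 2 - p by lra.
  have := @ler_powR R 2 ltac:(lra) 0 (2 - p) h0; by rewrite powRr0.
wlog ba : a b / b <= a.
  move=> H; have [ba|ab] := leP b a; first exact: H.
  by rewrite distrC (distrC a); apply: H; exact: ltW.
rewrite (ger0_norm (x := a - b)); last by lra.
have hab : Psi p b <= Psi p a by exact: Psi_mono.
rewrite ger0_norm; last by lra.
have ge0 := powR_ge0 (a - b) (p - 1).
have [b0|b0] := leP 0 b.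
  rewrite !Psi_pos //; last by lra.
  have := @subadd_powR (p - 1) b (a - b) s1 b0 ltac:(lra).
  rewrite addrC subrK => h.
  apply: le_trans (ler_peMl ge0 L1); lra.
have [a0|a0] := leP a 0.
  rewrite !Psi_neg; try lra.
  have := @subadd_powR (p - 1) (- a) (a - b) s1 ltac:(lra) ltac:(lra).
  have -> : - a + (a - b) = - b by lra.
  move=> h; apply: le_trans (ler_peMl ge0 L1); lra.
rewrite Psi_pos; last by lra.
rewrite Psi_neg; last by lra.
have := @conc2_powR (p - 1) a (- b) s1 ltac:(lra) ltac:(lra).
have -> : 1 - (p - 1) = 2 - p by lra.
lra.
Qed.

Lemma edge (a b : R) :
  2 `^ ((p - 2) / (p - 1)) * ((Psi p a - Psi p b) ^+ 2) `^ (p / (2 * (p - 1)))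
  <= (Psi p a - Psi p b) * (a - b).
Proof.
have P1 := p1; have P2 := p2.
set P := Psi p a - Psi p b; set d := a - b.
have s0 : 0 < p - 1 by lra.
have Pd0 : 0 <= P * d.
  have [ba|ab] := leP b a.
    by apply: mulr_ge0; rewrite /P /d subr_ge0 //; exact: Psi_mono.
  apply: mulr_le0; rewrite /P /d subr_le0; [apply: Psi_mono|]; exact: ltW.
have ePd : P * d = `|P| * `|d| by rewrite -normrM ger0_norm.
have H := Psi_hold a b; rewrite -/P -/d in H.
set L := 2 `^ (2 - p) in H.
have H2 : `|P| `^ (1 / (p - 1)) <= L `^ (1 / (p - 1)) * `|d|.
  have := @powle (1 / (p - 1)) _ _ ltac:(rewrite divr_ge0 //; lra) (normr_ge0 P) H.
  rewrite powRM ?powR_ge0 // -powRrM mul1r mulfV ?gt_eqF //.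
  by rewrite powRr1.
have eL : 2 `^ ((p - 2) / (p - 1)) * L `^ (1 / (p - 1)) = 1.
  rewrite /L -powRrM -powRD; last by apply/implyP => _; rewrite pnatr_eq0.
  have -> : (p - 2) / (p - 1) + (2 - p) * (1 / (p - 1)) = 0.
    by field; rewrite gt_eqF.
  by rewrite powRr0.
have eP : (P ^+ 2) `^ (p / (2 * (p - 1))) = `|P| * `|P| `^ (1 / (p - 1)).
  rewrite -real_normK ?num_real // -(powR_mulrn 2 (normr_ge0 P)) -powRrM.
  have -> : 2%:R * (p / (2 * (p - 1))) = 1 + 1 / (p - 1).
    by field; rewrite gt_eqF.
  rewrite powRD ?powRr1 //; apply/implyP => /eqP h.
  exfalso; have : 0 < 1 + 1 / (p - 1) by rewrite addr_gt0 // divr_gt0.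
  by rewrite h ltxx.
rewrite eP ePd mulrCA.
apply: ler_wpM2l; first exact: normr_ge0.
have H3 := ler_wpM2l (powR_ge0 2 ((p - 2) / (p - 1))) H2.
rewrite mulrA eL !mul1r in H3 *; exact: H3.
Qed.
End Psi.
End S.

Set Implicit Arguments. Unset Strict Implicit.
Section Sums.
Variable R : realType.

Lemma CS (m : nat) (a b : 'I_m -> R) : (forall j, 0 <= a j) ->
  (\sum_j a j * b j) ^+ 2 <= (\sum_j a j) * (\sum_j a j * b j ^+ 2).
Proof.
move=> a0.
have sa0 : 0 <= \sum_j a j by apply: sumr_ge0 => j _.
have [sa|sa] := eqVneq (\sum_j a j) 0.
  have az : forall j, a j = 0.
    by move=> j; move/eqP: sa; rewrite psumr_eq0 // => /allP /(_ j); rewrite mem_index_enum => /(_ isT) /eqP.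
  have B0 : \sum_j a j * b j = 0 by apply: big1 => j _; rewrite az mul0r.
  by rewrite B0 sa mul0r expr0n.
have sa1 : 0 < \sum_j a j by rewrite lt_neqAle eq_sym sa sa0.
set A := \sum_j a j; set B := \sum_j a j * b j; set C := \sum_j a j * b j ^+ 2.
pose l := B / A.
have H : 0 <= \sum_j a j * (b j - l) ^+ 2.
  by apply: sumr_ge0 => j _; apply: mulr_ge0 => //; exact: sqr_ge0.
have E : \sum_j a j * (b j - l) ^+ 2 = C - 2 * l * B + l ^+ 2 * A.
  transitivity (\sum_j (a j * b j ^+ 2 + (- (2 * l)) * (a j * b j) + l ^+ 2 * a j)).
    by apply: eq_bigr => j _; ring.
  by rewrite !big_split /= -!mulr_sumr; rewrite /A /B /C; ring.
rewrite E /l in H.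
have : 0 <= A * (C - 2 * (B / A) * B + (B / A) ^+ 2 * A) by apply: mulr_ge0 => //; lra.
have -> : A * (C - 2 * (B / A) * B + (B / A) ^+ 2 * A) = A * C - B ^+ 2.
  by field; rewrite gt_eqF.
lra.
Qed.

Variable m : nat.
Implicit Types (h : 'I_m -> R) (K : 'I_m -> 'I_m -> R) (u v : 'I_m -> R).

Definition Pd (p : R) u v (i j : 'I_m) : R := Psi p (u j - u i) - Psi p (v j - v i).

Lemma Kn_ge0 h K : 0 <= kernel_norm h K.
Proof. rewrite /kernel_norm; exact: bigmax_ge_id. Qed.

Lemma row_le h K (i : 'I_m) : (forall i j, 0 <= K i j) ->
  \sum_j h j * K i j <= kernel_norm h K.
Proof.
move=> K0; rewrite /kernel_norm.
have -> : \sum_j h j * K i j = \sum_j h j * `|K i j|.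
  by apply: eq_bigr => j _; rewrite ger0_norm.
exact: (le_bigmax _ (fun i => \sum_j h j * `|K i j|) i).
Qed.

Lemma plapD p h K u v (i : 'I_m) :
  plap p h K u i - plap p h K v i = - \sum_j h j * K i j * Pd p u v i j.
Proof.
rewrite /plap /Pd -opprD -sumrB; congr (- _); apply: eq_bigr => j _; ring.
Qed.

Lemma Pd_sym p u v (i j : 'I_m) : Pd p u v j i = - Pd p u v i j.
Proof.
rewrite /Pd -(opprB (u j)) -(opprB (v j)) !Psi_odd; ring.
Qed.

Lemma ident p h K u v : (forall i j, K i j = K j i) ->
  2 * \sum_i h i * (u i - v i) * (plap p h K u i - plap p h K v i)
  = \sum_i \sum_j h i * h j * K i j * Pd p u v i j * ((u j - v j) - (u i - v i)).
Proof.
move=> Ks.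
set X := \sum_i \sum_j h i * h j * K i j * Pd p u v i j * (u i - v i).
set Y := \sum_i \sum_j h i * h j * K i j * Pd p u v i j * (u j - v j).
have e1 : \sum_i h i * (u i - v i) * (plap p h K u i - plap p h K v i) = - X.
  rewrite /X -sumrN; apply: eq_bigr => i _; rewrite plapD mulrN mulr_sumr.
  by congr (- _); apply: eq_bigr => j _; ring.
have e2 : Y = - X.
  rewrite /Y /X exchange_big /= -sumrN; apply: eq_bigr => i _; rewrite -sumrN.
  by apply: eq_bigr => j _; rewrite Pd_sym Ks; ring.
have e3 : \sum_i \sum_j h i * h j * K i j * Pd p u v i j * ((u j - v j) - (u i - v i))
   = Y - X.
  rewrite /Y /X -sumrB; apply: eq_bigr => i _; rewrite -sumrB.
  by apply: eq_bigr => j _; ring.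
rewrite e1 e3 e2; ring.
Qed.

Lemma resid p h K u v : (forall i, 0 <= h i) -> (forall i j, 0 <= K i j) ->
  \sum_i h i * (plap p h K u i - plap p h K v i) ^+ 2
  <= kernel_norm h K * \sum_i \sum_j h i * h j * K i j * Pd p u v i j ^+ 2.
Proof.
move=> h0 K0; rewrite mulr_sumr; apply: ler_sum => i _.
rewrite plapD sqrrN.
have H := CS (a := fun j => h j * K i j) (fun j => Pd p u v i j) (fun j => mulr_ge0 (h0 j) (K0 i j)).
have H2 := ler_wpM2l (h0 i) H.
apply: (le_trans H2).
have -> : \sum_j h i * h j * K i j * Pd p u v i j ^+ 2
  = h i * \sum_j h j * K i j * Pd p u v i j ^+ 2.
  by rewrite mulr_sumr; apply: eq_bigr => j _; ring.
rewrite mulrCA.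
apply: ler_wpM2r.
  apply: mulr_ge0 => //; apply: sumr_ge0 => j _; apply: mulr_ge0; [exact: mulr_ge0|exact: sqr_ge0].
exact: row_le.
Qed.

Lemma Wle h K : (forall i, 0 <= h i) -> \sum_i h i = 1 -> (forall i j, 0 <= K i j) ->
  \sum_i \sum_j h i * h j * K i j <= kernel_norm h K.
Proof.
move=> h0 h1 K0.
apply: (@le_trans _ _ (\sum_i h i * kernel_norm h K)).
  apply: ler_sum => i _.
  have -> : \sum_j h i * h j * K i j = h i * \sum_j h j * K i j.
    by rewrite mulr_sumr; apply: eq_bigr => j _; ring.
  by apply: ler_wpM2l => //; exact: row_le.
by rewrite -mulr_suml h1 mul1r.
Qed.

Lemma lin2 (mu X : 'I_m -> 'I_m -> R) (c1 c2 : R) :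
  \sum_i \sum_j mu i j * (c1 + c2 * X i j)
  = c1 * \sum_i \sum_j mu i j + c2 * \sum_i \sum_j mu i j * X i j.
Proof.
rewrite !mulr_sumr -big_split /=; apply: eq_bigr => i _.
rewrite !mulr_sumr -big_split /=; apply: eq_bigr => j _; ring.
Qed.


End Sums.

Section Cn.
Variable R : realType.

Lemma C2_eq (p : R) : 1 < p <= 2 -> C2 p = 2 `^ (2 - p).
Proof.
move=> /andP[p1 p2].
have L1 : 1 <= 2 `^ (2 - p).
  have h0 : (0 : R) <= 2 - p by lra.
  have := @ler_powR R 2 ltac:(lra) 0 (2 - p) h0; by rewrite powRr0.
have L2 : (p - 1) * 2 `^ (2 - p) <= 2 `^ (2 - p).
  rewrite -[X in _ <= X]mul1r; apply: ler_wpM2r; [exact: powR_ge0|lra].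
rewrite /C2.
by rewrite max_l // ge_max L2 L1.
Qed.

Lemma Cn0 (p : R) : 1 < p -> Cn p 0 = 0.
Proof.
move=> p1; rewrite /Cn mulr0 powR0 ?mulr0 ?mul0r //.
rewrite div1r invr_eq0 subr_eq0; apply/negP => /eqP hh; lra.
Qed.

Lemma Cn_ge0 (p Kn : R) : 1 < p -> 0 <= Cn p Kn.
Proof.
move=> p1; rewrite /Cn; apply: mulr_ge0; first by apply: mulr_ge0; exact: powR_ge0.
have : 1 / p < 1 by rewrite ltr_pdivrMr ?mul1r //; lra.
lra.
Qed.

Lemma Cn_eq (p Kn : R) : 1 < p <= 2 -> 0 < Kn ->
  2 * Cn p Kn * Kn `^ (1 / (p - 1)) = 2 * (1 - 1 / p) * 2 `^ ((p - 2) / (p - 1)).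
Proof.
move=> hp Kn0; have /andP[p1 p2] := hp.
have s0 : p - 1 != 0 by apply/negP => /eqP hh; lra.
have s0' : 1 - p != 0 by apply/negP => /eqP hh; lra.
rewrite /Cn C2_eq // -powR12_sqrt ?powR_ge0 // -powRrM.
rewrite powRM ?powR_ge0 ?ltW // -powRrM.
set c := 2 `^ ((p - 2) / (2 * (p - 1))).
set c' := 2 `^ ((2 - p) * 2^-1 * (1 / (1 - p))).
have eK : Kn `^ (1 / (1 - p)) * Kn `^ (1 / (p - 1)) = 1.
  rewrite -powRD; last by apply/implyP => _; rewrite gt_eqF.
  have -> : 1 / (1 - p) + 1 / (p - 1) = 0 by field; rewrite s0 s0'.
  by rewrite powRr0.
have ec : c * c' = 2 `^ ((p - 2) / (p - 1)).
  rewrite /c /c' -powRD; last by apply/implyP => _; rewrite pnatr_eq0.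
  congr (_ `^ _); field; by rewrite s0 s0'.
have -> : 2 * (c * (c' * Kn `^ (1 / (1 - p))) * (1 - 1 / p)) * Kn `^ (1 / (p - 1))
  = 2 * (1 - 1 / p) * (c * c') * (Kn `^ (1 / (1 - p)) * Kn `^ (1 / (p - 1))) by ring.
by rewrite eK ec mulr1.
Qed.
End Cn.

Section Step.
Variable R : realType.
Variable m : nat.
Implicit Types (h : 'I_m -> R) (K : 'I_m -> 'I_m -> R) (u v : 'I_m -> R).

Lemma step (p : R) h K u v (tau0 : R) : 1 < p <= 2 -> (forall i, 0 < h i) ->
  \sum_i h i = 1 -> (forall i j, 0 <= K i j) -> (forall i j, K i j = K j i) ->
  0 < tau0 ->
  tau0 <= 2 * Cn p (kernel_norm h K) *
     (l2norm h (fun i => plap p h K u i - plap p h K v i)) `^ ((2 - p) / (p - 1)) ->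
  \sum_i h i * (u i + tau0 * (- plap p h K u i + plap p h K v i) - v i) ^+ 2
  <= \sum_i h i * (u i - v i) ^+ 2.
Proof.
move=> hp h0 h1 K0 Ks t0 tle.
have /andP[p1 p2] := hp.
have h0' : forall i, 0 <= h i by move=> i; exact: ltW.
set Kn := kernel_norm h K in tle *.
set D := fun i => plap p h K u i - plap p h K v i.
set Q := \sum_i h i * D i ^+ 2.
set A2 := \sum_i h i * (u i - v i) * D i.
have expand : \sum_i h i * (u i + tau0 * (- plap p h K u i + plap p h K v i) - v i) ^+ 2
  = \sum_i h i * (u i - v i) ^+ 2 - tau0 * (2 * A2 - tau0 * Q).
  transitivity (\sum_i (h i * (u i - v i) ^+ 2 + (- (2 * tau0)) * (h i * (u i - v i) * D i)
                + tau0 ^+ 2 * (h i * D i ^+ 2))).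
    by apply: eq_bigr => i _; rewrite /D; ring.
  by rewrite !big_split /= -!mulr_sumr /A2 /Q; ring.
rewrite expand.
suff H : tau0 * Q <= 2 * A2.
  have : 0 <= tau0 * (2 * A2 - tau0 * Q) by apply: mulr_ge0; lra.
  lra.
rewrite /A2 ident //.
set mu := fun i j => h i * h j * K i j.
have mu0 : forall i j, 0 <= mu i j by move=> i j; rewrite /mu; apply: mulr_ge0 => //; apply: mulr_ge0.
set X := fun i j => Pd p u v i j ^+ 2.
set S := \sum_i \sum_j mu i j * X i j.
set al := p / (2 * (p - 1)).
set ga := (2 - p) / (p - 1).
set c0 := 2 `^ ((p - 2) / (p - 1)).
have QS : Q <= Kn * S.
  have := resid p u v h0' K0; rewrite -/Kn.
  have -> : \sum_i \sum_j h i * h j * K i j * Pd p u v i j ^+ 2 = S.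
    by apply: eq_bigr => i _; apply: eq_bigr => j _; rewrite /mu /X.
  by [].
have S0 : 0 <= S.
  by apply: sumr_ge0 => i _; apply: sumr_ge0 => j _; apply: mulr_ge0 => //; exact: sqr_ge0.
have Q0 : 0 <= Q.
  by apply: sumr_ge0 => i _; apply: mulr_ge0 => //; exact: sqr_ge0.
have edgeSum : c0 * \sum_i \sum_j mu i j * X i j `^ al
   <= \sum_i \sum_j h i * h j * K i j * Pd p u v i j * (u j - v j - (u i - v i)).
  rewrite mulr_sumr; apply: ler_sum => i _.
  rewrite mulr_sumr; apply: ler_sum => j _.
  rewrite mulrCA -mulrA; apply: ler_wpM2l; first exact: mu0.
  have := edge p1 p2 (u j - u i) (v j - v i).
  have -> : u j - u i - (v j - v i) = u j - v j - (u i - v i) by ring.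
  by [].
have c00 : 0 < c0 by rewrite powR_gt0.
have Kn0 : 0 < Kn.
  have := Kn_ge0 h K; rewrite -/Kn le_eqVlt => /orP[/eqP Kz|//].
  by move: tle; rewrite -Kz Cn0 // mulr0 mul0r => ?; lra.
have [Sz|Sn] := eqVneq S 0.
  have : tau0 * Q <= 0.
    have : Q <= 0 by rewrite Sz mulr0 in QS.
    move=> ?; have -> : Q = 0 by lra. by rewrite mulr0.
  have : 0 <= c0 * \sum_i \sum_j mu i j * X i j `^ al.
    apply: mulr_ge0; first exact: ltW.
    by apply: sumr_ge0 => i _; apply: sumr_ge0 => j _; apply: mulr_ge0 => //; exact: powR_ge0.
  lra.
have Sp : 0 < S by rewrite lt_neqAle eq_sym Sn S0.
set mm := S / Kn.
have mm0 : 0 < mm by rewrite divr_gt0.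
have eS : S = Kn * mm by rewrite /mm mulrC divfK // gt_eqF.
have al1 : 1 <= al by rewrite /al ler_pdivlMr; lra.
have Jen : Kn * mm `^ al <= \sum_i \sum_j mu i j * X i j `^ al.
  apply: (@le_trans _ _ (\sum_i \sum_j mu i j * ((mm `^ al - al * mm `^ (al - 1) * mm)
              + (al * mm `^ (al - 1)) * X i j))).
    rewrite lin2 -/S.
    have W := Wle h0' h1 K0; rewrite -/Kn in W.
    have -> : \sum_i \sum_j mu i j = \sum_i \sum_j h i * h j * K i j by [].
    rewrite powR_m1 //.
    have ma : 0 < mm `^ al by rewrite powR_gt0.
    set W0 := \sum_i \sum_j h i * h j * K i j in W *.
    have e2 : (mm `^ al - al * (mm `^ al / mm) * mm) * W0 + al * (mm `^ al / mm) * S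
       = mm `^ al * ((1 - al) * W0 + al * Kn).
      by rewrite eS; field; rewrite gt_eqF.
    rewrite e2.
    have : 0 <= mm `^ al * ((al - 1) * (Kn - W0)) by apply: mulr_ge0; [exact: ltW|apply: mulr_ge0; lra].
    have E : mm `^ al * ((1 - al) * W0 + al * Kn) - Kn * mm `^ al = mm `^ al * ((al - 1) * (Kn - W0)) by ring.
    lra.
  apply: ler_sum => i _; apply: ler_sum => j _; apply: ler_wpM2l; first exact: mu0.
  have := tang_ge al1 mm0 (sqr_ge0 (Pd p u v i j)); rewrite /X.
  have -> : mm `^ al - al * mm `^ (al - 1) * mm + al * mm `^ (al - 1) * Pd p u v i j ^+ 2
    = mm `^ al + al * mm `^ (al - 1) * (Pd p u v i j ^+ 2 - mm) by ring.
  by [].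
suff : tau0 * Q <= c0 * (Kn * mm `^ al).
  have := ler_wpM2l (ltW c00) Jen; lra.
have ga0 : 0 <= ga by rewrite /ga divr_ge0 //; lra.
have sq : Num.sqrt Q <= Kn * mm `^ (2^-1).
  rewrite powR12_sqrt; last exact: ltW.
  have -> : Kn * Num.sqrt mm = Num.sqrt (Kn * S).
    rewrite eS mulrA -expr2 (sqrtrM mm (sqr_ge0 Kn)) sqrtr_sqr ger0_norm //; exact: ltW.
  by apply: ler_wsqrtr.
have rle : l2norm h D `^ ga <= Kn `^ ga * mm `^ (2^-1 * ga).
  rewrite (powRrM mm) -(powRM ga (ltW Kn0) (powR_ge0 _ _)).
  apply: powle => //; exact: sqrtr_ge0.
have Cn0' := Cn_ge0 (kernel_norm h K) p1.
have step1 : tau0 * Q <= tau0 * (Kn * S) by apply: ler_wpM2l; [exact: ltW|exact: QS].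
have KS0 : 0 <= Kn * S by apply: mulr_ge0 => //; exact: ltW.
have step2 : tau0 * (Kn * S) <= 2 * Cn p Kn * (Kn `^ ga * mm `^ (2^-1 * ga)) * (Kn * S).
  apply: ler_wpM2r => //; apply: (le_trans tle); apply: ler_wpM2l; last exact: rle.
  by apply: mulr_ge0 => //.
have eK : Kn `^ ga * Kn = Kn `^ (1 / (p - 1)).
  rewrite -{2}(powRr1 (ltW Kn0)) -powRD; last by apply/implyP => _; rewrite gt_eqF.
  by congr (_ `^ _); rewrite /ga; field; apply/negP => /eqP hh; lra.
have em : mm `^ (2^-1 * ga) * mm = mm `^ al.
  rewrite -{2}(powRr1 (ltW mm0)) -powRD; last by apply/implyP => _; rewrite gt_eqF.
  by congr (_ `^ _); rewrite /ga /al; field; apply/negP => /eqP hh; lra.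
have eq3 : 2 * Cn p Kn * (Kn `^ ga * mm `^ (2^-1 * ga)) * (Kn * S)
   = (2 * Cn p Kn * Kn `^ (1 / (p - 1))) * Kn * mm `^ al.
  rewrite -eK -em eS; ring.
rewrite eq3 Cn_eq // in step2.
have p3 : 2 * (1 - 1 / p) <= 1.
  have -> : 2 * (1 - 1 / p) = 1 - (2 - p) / p by field; apply/negP => /eqP hh; lra.
  have : 0 <= (2 - p) / p by apply: divr_ge0; lra.
  lra.
have : 0 <= Kn * mm `^ al by apply: mulr_ge0; [exact: ltW|exact: powR_ge0].
have : 2 * (1 - 1 / p) * c0 * Kn * mm `^ al <= c0 * (Kn * mm `^ al).
  have -> : 2 * (1 - 1 / p) * c0 * Kn * mm `^ al = (2 * (1 - 1 / p)) * (c0 * (Kn * mm `^ al)) by ring.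
  rewrite -[X in _ <= X]mul1r; apply: ler_wpM2r; last exact: p3.
  by apply: mulr_ge0; [exact: ltW|apply: mulr_ge0; [exact: ltW|exact: powR_ge0]].
rewrite -/c0 in step2.
lra.
Qed.

Lemma resbound (p : R) h K u v : 1 < p <= 2 -> (forall i, 0 <= h i) ->
  \sum_i h i = 1 -> (forall i j, 0 <= K i j) -> (forall i j, K i j = K j i) ->
  \sum_i h i * (plap p h K u i - plap p h K v i) ^+ 2
  <= kernel_norm h K * (8 * kernel_norm h K
       + 32 * kernel_norm h K * \sum_i h i * (u i - v i) ^+ 2).
Proof.
move=> hp h0 h1 K0 Ks; have /andP[p1 p2] := hp.
set Kn := kernel_norm h K.
apply: (le_trans (resid p u v h0 K0)); rewrite -/Kn.
apply: ler_wpM2l; first exact: Kn_ge0.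
set w := fun i => u i - v i.
set mu := fun i j => h i * h j * K i j.
have mu0 : forall i j, 0 <= mu i j by move=> i j; rewrite /mu; apply: mulr_ge0 => //; apply: mulr_ge0.
have edgeb : forall i j, Pd p u v i j ^+ 2 <= 8 + 16 * w i ^+ 2 + 16 * w j ^+ 2.
  move=> i j.
  have H := Psi_hold p1 p2 (u j - u i) (v j - v i).
  rewrite (_ : u j - u i - (v j - v i) = w j - w i) in H; last by rewrite /w; ring.
  have L2 : 2 `^ (2 - p) <= 2.
    have e1 : 2 - p <= 1 by lra.
    have := @ler_powR R 2 ltac:(lra) (2 - p) 1 e1; by rewrite powRr1.
  set d := w j - w i in H *.
  have dd : `|d| `^ (p - 1) <= 1 + `|d|.
    have [d1|d1] := leP `|d| 1.
      have := @powle R (p - 1) `|d| 1 ltac:(lra) (normr_ge0 d) d1; rewrite powR1 => ?.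
      have := normr_ge0 d; lra.
    have := @ler1_powR R `|d| (p - 1) ltac:(lra) ltac:(lra); lra.
  have HP : `|Pd p u v i j| <= 2 * (1 + `|d|).
    apply: (le_trans H); rewrite /Pd; apply: ler_pM => //; [exact: powR_ge0|exact: powR_ge0].
  have n2 : `|d| ^+ 2 = d ^+ 2 by rewrite real_normK ?num_real.
  have P2 : Pd p u v i j ^+ 2 = `|Pd p u v i j| ^+ 2 by rewrite real_normK ?num_real.
  have dn := normr_ge0 d; have Pn := normr_ge0 (Pd p u v i j).
  rewrite P2.
  have : `|Pd p u v i j| ^+ 2 <= (2 * (1 + `|d|)) ^+ 2.
    by rewrite ler_pXn2r // ?nnegrE //; lra.
  rewrite /d in n2 *.
  move=> HH; have s1 := sqr_ge0 (1 - `|w j - w i|); have s2 := sqr_ge0 (w i + w j).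
  lra.
apply: (@le_trans _ _ (\sum_i \sum_j mu i j * (8 + 16 * w i ^+ 2 + 16 * w j ^+ 2))).
  by apply: ler_sum => i _; apply: ler_sum => j _; rewrite /mu; apply: ler_wpM2l; [exact: mu0|exact: edgeb].
have E : \sum_i \sum_j mu i j * (8 + 16 * w i ^+ 2 + 16 * w j ^+ 2)
  = 8 * (\sum_i \sum_j mu i j) + 16 * (\sum_i \sum_j mu i j * w i ^+ 2)
    + 16 * (\sum_i \sum_j mu i j * w j ^+ 2).
  rewrite !mulr_sumr -!big_split /=; apply: eq_bigr => i _.
  rewrite !mulr_sumr -!big_split /=; apply: eq_bigr => j _; ring.
have E2 : \sum_i \sum_j mu i j * w j ^+ 2 = \sum_i \sum_j mu i j * w i ^+ 2.
  rewrite exchange_big /=; apply: eq_bigr => i _; apply: eq_bigr => j _.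
  by rewrite /mu Ks; ring.
have B1 : \sum_i \sum_j mu i j * w i ^+ 2 <= Kn * \sum_i h i * (u i - v i) ^+ 2.
  rewrite mulr_sumr; apply: ler_sum => i _.
  have -> : \sum_j mu i j * w i ^+ 2 = (\sum_j h j * K i j) * (h i * w i ^+ 2).
    by rewrite mulr_suml; apply: eq_bigr => j _; rewrite /mu; ring.
  rewrite mulrCA (mulrC Kn) -mulrA.
  apply: ler_wpM2l => //.
  rewrite mulrC /w /=; apply: ler_wpM2r; [exact: sqr_ge0|exact: row_le].
have W : \sum_i \sum_j mu i j <= Kn := Wle h0 h1 K0.
rewrite E E2.
set Wg := \sum_i h i * (u i - v i) ^+ 2 in B1 *.
lra.
Qed.
End Step.


Lemma l2normZ (R : realType) (m : nat) (h : 'I_m -> R) (c : R) (G : 'I_m -> R) :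
  (forall i, 0 <= h i) ->
  l2norm h (fun i => c * G i) = `|c| * l2norm h G.
Proof.
move=> h0; rewrite /l2norm.
have -> : \sum_i h i * (c * G i) ^+ 2 = c ^+ 2 * \sum_i h i * G i ^+ 2.
  by rewrite mulr_sumr; apply: eq_bigr => i _; ring.
by rewrite sqrtrM ?sqr_ge0 // sqrtr_sqr.
Qed.

Unset Implicit Arguments. Set Strict Implicit.

Theorem lemma6p6 (R : realType) (p : R)
  (m : nat -> nat)
  (h : forall n, 'I_(m n) -> R)
  (K : forall n, 'I_(m n) -> 'I_(m n) -> R)
  (f g ustar : forall n, 'I_(m n) -> R) :
  1 < p <= 2 ->
  (* cells: positive measures partitioning Omega = [0,1]^d *)
  (forall n i, 0 < h n i) ->
  (forall n, \sum_(i < m n) h n i = 1) ->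
  (* kernel nonnegative and symmetric *)
  (forall n i j, 0 <= K n i j) ->
  (forall n i j, K n i j = K n j i) ->
  (* sup_n ||I_n K||_{L^{infty,1}} < +oo *)
  (exists M : R, forall n, kernel_norm (h n) (K n) <= M) ->
  (* stationary solution u* of Delta_p^K u* = f *)
  (forall n i, plap p (h n) (K n) (ustar n) i = f n i) ->
  (exists M : R, forall n,
      l2norm (h n) (fun i => g n i - ustar n i) <= M) ->
  exists C : R, 0 < C /\
    forall (N : nat) (T : R) (t : nat -> R),
      t 0%N = 0 -> t N = T ->
      (forall k, (k < N)%N -> t k < t k.+1) ->
      (* step-size restriction, for every n *)
      (forall n k, (k < N)%N ->
         tau t k <= 2 * Cn p (kernel_norm (h n) (K n)) *
           (l2norm (h n)
              (fun i => plap p (h n) (K n)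
                          (scheme p (h n) (K n) (f n) (g n) t k) i - f n i))
             `^ ((2 - p) / (p - 1))) ->
      forall n k s, (k < N)%N -> t k < s <= t k.+1 ->
        l2norm (h n)
          (fun i => u_tilde (scheme p (h n) (K n) (f n) (g n) t) t k s i
                    - u_bar (scheme p (h n) (K n) (f n) (g n) t) k i)
        <= C * taumax t N.
Proof.
move=> hp h0 h1 K0 Ks [MK HMK] hf [Mg HMg].
set B := MK ^+ 2 * (8 + 32 * Mg ^+ 2).
exists (Num.sqrt B + 1); split.
  by have := sqrtr_ge0 B; lra.
move=> N T t t0 tN tinc stepc n k s kN /andP[sk1 sk2].
set u := scheme p (h n) (K n) (f n) (g n) t.
have h0' : forall i, 0 <= h n i by move=> i; exact: ltW.
have ef : f n = plap p (h n) (K n) (ustar n) by apply: boolp.funext => i; rewrite hf.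
have uS : forall k i, u k.+1 i = u k i + tau t k * (- plap p (h n) (K n) (u k) i
                                     + plap p (h n) (K n) (ustar n) i).
  by move=> k' i; rewrite /u /= -ef.
have stab : forall k, (k <= N)%N -> \sum_i h n i * (u k i - ustar n i) ^+ 2
      <= \sum_i h n i * (g n i - ustar n i) ^+ 2.
  elim=> [|k' IH] kle; first by [].
  have kN' : (k' < N)%N by [].
  apply: le_trans (IH (ltnW kle)).
  have := @step R (m n) p (h n) (K n) (u k') (ustar n) (tau t k') hp (h0 n) (h1 n) (K0 n) (Ks n).
  rewrite /tau subr_gt0 (tinc k' kN').
  move=> H.
  have sc := stepc n k' kN'; rewrite -/u in sc.
  have e2 : (fun i => plap p (h n) (K n) (u k') i - f n i)
     = (fun i => plap p (h n) (K n) (u k') i - plap p (h n) (K n) (ustar n) i).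
    by apply: boolp.funext => i; rewrite hf.
  rewrite e2 in sc.
  have := H isT sc.
  have -> : \sum_i h n i * (u k'.+1 i - ustar n i) ^+ 2
     = \sum_i h n i * (u k' i + tau t k' * (- plap p (h n) (K n) (u k') i
                + plap p (h n) (K n) (ustar n) i) - ustar n i) ^+ 2.
    by apply: eq_bigr => i _; rewrite uS.
  by [].
have tk0 : 0 < tau t k by rewrite /tau subr_gt0; exact: tinc.
set D := fun i => plap p (h n) (K n) (u k) i - plap p (h n) (K n) (ustar n) i.
have e3 : (fun i => u_tilde u t k s i - u_bar u k i) = (fun i => (- (s - t k)) * D i).
  apply: boolp.funext => i; rewrite /u_tilde /u_bar uS /D.
  move: tk0; rewrite /tau => tk0.
  field; rewrite subr_eq0; apply/negP => /eqP hh; rewrite hh subrr in tk0; lra.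
rewrite e3 l2normZ // normrN ger0_norm; last by lra.
have tm : tau t k <= taumax t N.
  by rewrite /taumax; exact: (le_bigmax 0 (fun k0 : 'I_N => tau t k0) (Ordinal kN)).
have rB : l2norm (h n) D <= Num.sqrt B + 1.
  suff : l2norm (h n) D <= Num.sqrt B by lra.
  rewrite /l2norm; apply: ler_wsqrtr.
  apply: (le_trans (resbound (u k) (ustar n) hp h0' (h1 n) (K0 n) (Ks n))).
  set Kn := kernel_norm (h n) (K n).
  set W := \sum_i h n i * (u k i - ustar n i) ^+ 2.
  have Kn0 : 0 <= Kn by exact: Kn_ge0.
  have KM : Kn <= MK by exact: HMK.
  have W0 : 0 <= W by apply: sumr_ge0 => i _; apply: mulr_ge0 => //; exact: sqr_ge0.
  have WM : W <= Mg ^+ 2.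
    apply: (le_trans (stab k (ltnW kN))).
    have := HMg n; rewrite /l2norm.
    set G := \sum_i h n i * (g n i - ustar n i) ^+ 2.
    have G0 : 0 <= G by apply: sumr_ge0 => i _; apply: mulr_ge0 => //; exact: sqr_ge0.
    move=> HG; rewrite -(sqr_sqrtr G0).
    have := sqrtr_ge0 G; nra.
  have -> : Kn * (8 * Kn + 32 * Kn * W) = Kn ^+ 2 * (8 + 32 * W) by ring.
  rewrite /B; apply: ler_pM.
  - exact: sqr_ge0.
  - lra.
  - nra.
  - lra.
have st0 : 0 <= s - t k by lra.
have sttau : s - t k <= taumax t N by rewrite /tau in tm; lra.
rewrite mulrC; apply: ler_pM => //; exact: sqrtr_ge0.
Qed.
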